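(* Let $M\in\mathrm{SO}(2n,2n-1)$ be totally positive (all minors of $M$ in the standard basis are strictly positive). Then the middle diagonal entry satisfies $M_{2n,2n}\ge 1$.
   Context: $\mathrm{SO}(2n,2n-1)$ is the group of determinant-one real $(4n-1)\times(4n-1)$ matrices $M$ with $M^TJM=J$, where $J$ is the antidiagonal matrix with $J_{i,4n-i}=(-1)^i$ and all other entries $0$. *)

(* Defs.v *)
From mathcomp Require Import all_boot all_order all_algebra.
From mathcomp Require Import all_classical all_reals.
Set Implicit Arguments. Unset Strict Implicit. Unset Printing Implicit Defensive.
Import Order.TTheory GRing.Theory Num.Theory.
Local Open Scope ring_scope.

Definition Jform (R : ringType) (n : nat) : 'M[R]_(4 * n - 1) :=
  \matrix_(i, j) (if (i.+1 + j.+1 == 4 * n)%N then (-1) ^+ i.+1 else 0).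

Definition in_SO (R : comRingType) (n : nat) (M : 'M[R]_(4 * n - 1)) : Prop :=
  \det M = 1 /\ M^T *m Jform R n *m M = Jform R n.

Definition strictly_increasing (k N : nat) (f : 'I_k -> 'I_N) : Prop :=
  forall i j : 'I_k, (i < j)%N -> (f i < f j)%N.

Definition totally_positive (R : realDomainType) (N : nat) (M : 'M[R]_N) : Prop :=
  forall (k : nat) (f g : 'I_k.+1 -> 'I_N),
    strictly_increasing f -> strictly_increasing g ->
    0 < \det (mxsub f g M).

(* Main.v *)
Require Import Defs.
From mathcomp Require Import all_boot all_order all_algebra all_fingroup.
From mathcomp Require Import all_classical all_reals.
From mathcomp Require Import zify ring lra.
Set Implicit Arguments. Unset Strict Implicit. Unset Printing Implicit Defensive.
Import Order.TTheory GRing.Theory Num.Theory.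
Local Open Scope ring_scope.

Section S.
Variable R : realType.

Definition TP0 (N : nat) (A : 'M[R]_N) : Prop :=
  forall (k : nat) (f g : 'I_k -> 'I_N),
    strictly_increasing f -> strictly_increasing g ->
    0 < \det (mxsub f g A).

Lemma TP_TP0 N (A : 'M[R]_N) : totally_positive A -> TP0 A.
Proof.
move=> H [|k] f g hf hg; first by rewrite det_mx00 ltr01.
exact: H.
Qed.

Definition schur n (A : 'M[R]_(1 + n)) : 'M[R]_n :=
  drsubmx A - (A ord0 ord0)^-1 *: (dlsubmx A *m ursubmx A).

Lemma det_schur n (A : 'M[R]_(1 + n)) : A ord0 ord0 != 0 ->
  \det A = A ord0 ord0 * \det (schur A).
Proof.
move=> a0.
have ha : ulsubmx A = (A ord0 ord0)%:M.
  by apply/matrixP => i j; rewrite !ord1 !mxE /=; congr (A _ _); apply/val_inj.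
pose L : 'M[R]_(1 + n) := block_mx 1%:M 0 ((A ord0 ord0)^-1 *: dlsubmx A) 1%:M.
pose U : 'M[R]_(1 + n) := block_mx (ulsubmx A) (ursubmx A) 0 (schur A).
have eA : A = L *m U.
  rewrite /L /U mulmx_block !mul1mx !mul0mx ?addr0 ?mulmx0 ?add0r ?mul1mx ?mulmx1.
  rewrite ha -scalemxAl mul_mx_scalar scalerA mulVf // scale1r -ha.
  by rewrite -scalemxAl /schur addrC subrK submxK.
rewrite {1}eA det_mulmx /L /U det_lblock det_ublock !det1 mul1r ha det_mx11 mxE /=.
by rewrite mul1r mulr1n.
Qed.


Lemma entry_pos N (A : 'M[R]_N) i j : TP0 A -> 0 < A i j.
Proof.
move=> H; have := H 1%N (fun _ => i) (fun _ => j).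
rewrite det_mx11 mxE; apply.
  by move=> x y; rewrite !ord1.
by move=> x y; rewrite !ord1.
Qed.

Definition ext k n (f : 'I_k -> 'I_n) (i : 'I_k.+1) : 'I_n.+1 :=
  if unlift ord0 i is Some j then lift ord0 (f j) else ord0.

Lemma ext0 k n (f : 'I_k -> 'I_n) : ext f ord0 = ord0.
Proof. by rewrite /ext unlift_none. Qed.

Lemma extS k n (f : 'I_k -> 'I_n) j : ext f (lift ord0 j) = lift ord0 (f j).
Proof. by rewrite /ext liftK. Qed.

Lemma ext_inc k n (f : 'I_k -> 'I_n) :
  strictly_increasing f -> strictly_increasing (ext f).
Proof.
move=> hf i j; case: (unliftP ord0 i) => [i'|] ->; case: (unliftP ord0 j) => [j'|] ->;
  rewrite ?ext0 ?extS /= ?lift0 //.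
by rewrite !ltnS; apply: hf.
Qed.

Lemma lift_inc n (h : 'I_n) : strictly_increasing (lift h).
Proof.
move=> i j /= hij; rewrite /bump; case: (leqP h i); case: (leqP h j) => /= ? ?; lia.
Qed.

Lemma mxsub_schur k n (f g : 'I_k -> 'I_n) (A : 'M[R]_(1 + n)) :
  mxsub f g (schur A) = schur (mxsub (ext f) (ext g) A : 'M_(1 + k)).
Proof.
have eR : forall m (i : 'I_m), rshift 1 i = lift ord0 i by move=> m i; apply/val_inj.
have eL : forall m, lshift m (ord0 : 'I_1) = ord0 by move=> m; apply/val_inj.
apply/matrixP => i j; rewrite !mxE !big_ord1 !mxE.
by rewrite !eR !eL !extS !ext0.
Qed.

Lemma schur00 n (A : 'M[R]_(1 + n)) i j :
  schur A i j = A (lift ord0 i) (lift ord0 j)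
     - (A ord0 ord0)^-1 * (A (lift ord0 i) ord0 * A ord0 (lift ord0 j)).
Proof.
have eR : forall m (i : 'I_m), rshift 1 i = lift ord0 i by move=> m i'; apply/val_inj.
have eL : forall m, lshift m (ord0 : 'I_1) = ord0 by move=> m; apply/val_inj.
by rewrite !mxE !big_ord1 !mxE !eR !eL.
Qed.

Lemma TP0_schur n (A : 'M[R]_(1 + n)) : TP0 A -> TP0 (schur A).
Proof.
move=> H k f g hf hg; rewrite mxsub_schur.
set B : 'M_(1 + k) := mxsub _ _ A.
have hB : 0 < B ord0 ord0 by rewrite /B mxE !ext0; exact: entry_pos.
have := H _ _ _ (ext_inc hf) (ext_inc hg); rewrite -/B (det_schur (lt0r_neq0 hB)).
by rewrite pmulr_rgt0.
Qed.

Definition revm N (A : 'M[R]_N) : 'M[R]_N := \matrix_(i, j) A (rev_ord i) (rev_ord j).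

Lemma det_revm N (A : 'M[R]_N) : \det (revm A) = \det A.
Proof.
pose s := perm (@rev_ord_inj N).
have -> : revm A = row_perm s (col_perm s A).
  by apply/matrixP => i j; rewrite !mxE !permE.
rewrite row_permE col_permE !det_mulmx !det_perm odd_permV.
by case: odd_perm; rewrite ?expr0 ?expr1 ?mul1r ?mulr1 ?mulN1r ?mulrN1 ?opprK.
Qed.

Lemma TP0_revm N (A : 'M[R]_N) : TP0 A -> TP0 (revm A).
Proof.
move=> H k f g hf hg.
pose f' := fun i => rev_ord (f (rev_ord i)).
pose g' := fun i => rev_ord (g (rev_ord i)).
have -> : mxsub f g (revm A) = revm (mxsub f' g' A).
  by apply/matrixP => i j; rewrite !mxE /f' /g' !rev_ordK.
rewrite det_revm; apply: H.
  move=> i j hij; rewrite /f' /=.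
  have : (f (rev_ord j) < f (rev_ord i))%N by apply: hf => /=; have := ltn_ord i; have := ltn_ord j; lia.
  have := ltn_ord (f (rev_ord i)); have := ltn_ord (f (rev_ord j)); lia.
move=> i j hij; rewrite /g' /=.
have : (g (rev_ord j) < g (rev_ord i))%N by apply: hg => /=; have := ltn_ord i; have := ltn_ord j; lia.
have := ltn_ord (g (rev_ord i)); have := ltn_ord (g (rev_ord j)); lia.
Qed.


Lemma fisch n (A : 'M[R]_n.+1) (m : 'I_n.+1) : TP0 A ->
  \det A <= A m m * \det (mxsub (lift m) (lift m) A : 'M_n).
Proof.
elim: n A m => [|n IH] A m H.
  by rewrite det_mx11 det_mx00 mulr1 !ord1.
have key : forall (B : 'M[R]_n.+2) (m' : 'I_n.+1), TP0 B ->
    \det B <= B (lift ord0 m') (lift ord0 m') *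
      \det (mxsub (lift (lift ord0 m')) (lift (lift ord0 m')) B : 'M_n.+1).
  move=> B m' HB.
  set mm := lift ord0 m'.
  have ha : 0 < B ord0 ord0 by exact: entry_pos.
  pose S := schur (B : 'M_(1 + n.+1)).
  have hS : TP0 S := TP0_schur HB.
  have e1 : \det B = B ord0 ord0 * \det S := det_schur (lt0r_neq0 ha).
  have e3 : mxsub (ext (lift m')) (ext (lift m')) B = mxsub (lift mm) (lift mm) B :> 'M_n.+1.
    apply: eq_mxsub => i; case: (unliftP ord0 i) => [i'|] ->;
      rewrite ?ext0 ?extS; apply/val_inj => /=; rewrite /bump /= // leq_add2l addnCA //=.
  have e2 : mxsub (lift m') (lift m') S = schur (mxsub (lift mm) (lift mm) B : 'M_(1 + n)).
    by rewrite /S mxsub_schur e3.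
  have e4 : \det (mxsub (lift mm) (lift mm) B : 'M_n.+1) =
       B ord0 ord0 * \det (mxsub (lift m') (lift m') S : 'M_n).
    have h00 : (mxsub (lift mm) (lift mm) B : 'M_(1 + n)) ord0 ord0 = B ord0 ord0.
      by rewrite mxE; congr (B _ _); apply/val_inj.
    have l0 : lift mm ord0 = ord0 by apply/val_inj.
    rewrite (@det_schur n (mxsub (lift mm) (lift mm) B)); last by rewrite mxE l0 lt0r_neq0.
    by rewrite mxE l0 e2.
  have hd' := hS _ _ _ (@lift_inc n.+1 m') (@lift_inc n.+1 m').
  have hIH := IH S m' hS.
  have hSm : S m' m' <= B mm mm.
    have -> : S m' m' = B mm mm - (B ord0 ord0)^-1 * (B mm ord0 * B ord0 mm) by exact: schur00.
    have p1 : 0 < (B ord0 ord0)^-1 by rewrite invr_gt0.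
    have q1 : 0 < B mm ord0 := entry_pos mm ord0 HB.
    have q2 : 0 < B ord0 mm := entry_pos ord0 mm HB.
    rewrite gerBl; apply/ltW; rewrite !mulr_gt0 //.
  have h1 : S m' m' * \det (mxsub (lift m') (lift m') S : 'M_n)
      <= B mm mm * \det (mxsub (lift m') (lift m') S : 'M_n).
    by rewrite (ler_pM2r hd').
  have h2 := le_trans hIH h1.
  clearbody S mm; rewrite e1.
  apply: (le_trans (y := B mm mm * (B ord0 ord0 * \det (mxsub (lift m') (lift m') S : 'M_n)))).
    by rewrite mulrCA (ler_pM2l ha).
  rewrite le_eqVlt; apply/orP; left; apply/eqP; congr (_ * _); exact: (esym e4).
case: (unliftP ord0 m) => [m'|] ->; first exact: key.
have hr := key (revm A) ord_max (TP0_revm H).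
have F : forall x : 'I_n.+1, (1 + n <= x)%N = false by move=> x; rewrite leqNgt ltn_ord.
have e6 : mxsub (lift (lift ord0 (ord_max : 'I_n.+1))) (lift (lift ord0 (ord_max : 'I_n.+1))) (revm A)
   = revm (mxsub (lift ord0) (lift ord0) A) :> 'M_n.+1.
  apply/matrixP => i j; rewrite !mxE; congr (A _ _); apply/val_inj => /=;
   rewrite /bump /= F /=; [have := ltn_ord i|have := ltn_ord j]; lia.
have e8 : \det (mxsub (lift (lift ord0 (ord_max : 'I_n.+1))) (lift (lift ord0 (ord_max : 'I_n.+1))) (revm A) : 'M_n.+1)
   = \det (mxsub (lift ord0) (lift ord0) A : 'M_n.+1).
  by rewrite e6 det_revm.
have e7 : revm A (lift ord0 (ord_max : 'I_n.+1)) (lift ord0 (ord_max : 'I_n.+1)) = A ord0 ord0.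
  rewrite mxE; congr (A _ _); apply/val_inj => /=; by rewrite /bump leq0n add1n subnn.
rewrite -(det_revm A); apply: (le_trans hr); rewrite le_eqVlt; apply/orP; left; apply/eqP.
congr (_ * _); [exact: e7 | exact: e8].
Qed.


Lemma fischN N (A : 'M[R]_N) (m : 'I_N) : TP0 A ->
  \det A <= A m m * \det (mxsub (lift m) (lift m) A : 'M_N.-1).
Proof. by case: N A m => [|N] A m; [case: m | exact: fisch]. Qed.

Lemma Jrev n (i j : 'I_(4 * n - 1)) :
  Jform R n i j = if j == rev_ord i then (-1) ^+ i.+1 else 0.
Proof.
rewrite mxE; congr (if _ then _ else _).
have := ltn_ord i; have := ltn_ord j => hj hi.
apply/eqP/eqP => h.
  by apply/val_inj => /=; lia.
by rewrite h /=; lia.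
Qed.

Lemma mulJl n (B : 'M[R]_(4 * n - 1)) i j :
  (Jform R n *m B) i j = (-1) ^+ i.+1 * B (rev_ord i) j.
Proof.
rewrite mxE (bigD1 (rev_ord i)) //= Jrev eqxx big1 ?addr0 // => k /negbTE hk.
by rewrite Jrev hk mul0r.
Qed.

Lemma mulJr n (B : 'M[R]_(4 * n - 1)) i j :
  (B *m Jform R n) i j = B i (rev_ord j) * (-1) ^+ (rev_ord j).+1.
Proof.
rewrite mxE (bigD1 (rev_ord j)) //= Jrev rev_ordK eqxx big1 ?addr0 // => k hk.
rewrite Jrev; case: eqP => [e|]; last by rewrite mulr0.
by move: hk; rewrite e rev_ordK eqxx.
Qed.

Lemma JJ n : Jform R n *m Jform R n = 1%:M.
Proof.
apply/matrixP => i j; rewrite mulJl Jrev rev_ordK !mxE.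
case: eqP => [->|/eqP ne]; last by rewrite mulr0 eq_sym (negbTE ne).
rewrite eqxx -exprD.
have := ltn_ord i => hi.
rewrite (_ : (i.+1 + (rev_ord i).+1 = (2 * n) * 2)%N); last by rewrite /=; lia.
by rewrite exprM sqrr_sign.
Qed.

End S.

Unset Implicit Arguments.
(* middle entry M_{2n,2n} (1-indexed) = index 2n-1 (0-indexed) *)
Theorem lemma4p7 (R : realType) (n : nat) (hn : (0 < n)%N)
  (M : 'M[R]_(4 * n - 1)) (hlt : (2 * n - 1 < 4 * n - 1)%N) :
  in_SO M -> totally_positive M ->
  1 <= M (Ordinal hlt) (Ordinal hlt).
Proof.
move=> [hdet hJ] hTP.
have H0 := TP_TP0 hTP.
pose m := Ordinal hlt.
pose X := Jform R n *m M^T *m Jform R n.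
have hX : X *m M = 1%:M.
  by rewrite /X -!mulmxA (mulmxA M^T) hJ JJ.
have hadj : \adj M = X.
  by rewrite -[\adj M]mul1mx -hX -mulmxA mul_mx_adj hdet mulmx1.
have rm : rev_ord m = m by apply/val_inj => /=; lia.
have eX : X m m = M m m.
  rewrite /X mulJr mulJl !mxE rm.
  by rewrite mulrC mulrA -expr2 sqrr_sign mul1r.
have eC : \adj M m m = \det (mxsub (lift m) (lift m) M : 'M_((4 * n - 1).-1)).
  rewrite mxE /cofactor -signr_odd addnn odd_double expr0 mul1r.
  by congr (\det _); apply/matrixP => i j; rewrite !mxE.
have e : M m m = \det (mxsub (lift m) (lift m) M : 'M_((4 * n - 1).-1)).
  by rewrite -eC hadj eX.
have hf := fischN m H0.
have hp : 0 < M m m := entry_pos m m H0.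
rewrite hdet -e in hf.
rewrite -/m; nra.
Qed.
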